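(* Let $A$ be a configuration of at least $3$ pairwise distinct points in $\mathbb{R}^2$ and let $a\in A$. If the points of $A\setminus\{a\}$ are not all contained in a common line, then there is a line $L$ such that $|L\cap A|=2$ and $a\notin L$. *)

(* Defs.v *)
(* points of R^2 are pairs of reals; a finite configuration
   of pairwise distinct points is a duplicate-free list. *)
From Stdlib Require Import Reals List.
Open Scope R_scope.

Definition point := (R * R)%type.

Record line := mkLine { lu : R; lv : R; lw : R; lnz : lu <> 0 \/ lv <> 0 }.

Definition on_line (L : line) (p : point) : Prop :=
  lu L * fst p + lv L * snd p = lw L.

(* |L ∩ A| for a duplicate-free list A: the number of listed points on L. *)
Definition card_on_line (L : line) (A : list point) : nat :=
  length (filter (fun p => if Req_EM_T (lu L * fst p + lv L * snd p) (lw L)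
                           then true else false) A).

Definition collinear (B : list point) : Prop :=
  exists L : line, forall p, In p B -> on_line L p.

Definition remove_pt (a : point) (A : list point) : list point :=
  filter (fun p => if (Req_EM_T (fst p) (fst a)) then
                     if Req_EM_T (snd p) (snd a) then false else true
                   else true) A.

(* Main.v *)
Require Import Defs.
From Stdlib Require Import Reals List Lra Psatz Classical.
Import ListNotations.
Open Scope R_scope.

Definition slope (r r' : point) := (snd r' - snd r)/(fst r' - fst r).
Definition vd (p r r' : point) := Rabs (snd p - (snd r + slope r r' * (fst p - fst r))).
Definition good3 (p r r' : point) := fst r <> fst r' /\ 0 < vd p r r'.

Lemma exists_min {X : Type} (l : list X) (g : X -> Prop) (f : X -> R) :
  (exists x, In x l /\ g x) ->
  exists x, In x l /\ g x /\ forall y, In y l -> g y -> f x <= f y.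
Proof.
  induction l as [|h t IH]; intros [x [Hx Hg]]; [destruct Hx|].
  destruct (classic (exists x, In x t /\ g x)) as [E|NE].
  - destruct (IH E) as [y [Hy [Hgy Hm]]].
    destruct (classic (g h)) as [Gh|NGh].
    + destruct (Rle_dec (f h) (f y)).
      * exists h; split; [left; auto|split; auto].
        intros z [<-|Hz] Hgz; [lra|]. specialize (Hm z Hz Hgz); lra.
      * exists y; split; [right; auto|split; auto].
        intros z [<-|Hz] Hgz; [lra|]. auto.
    + exists y; split; [right; auto|split; auto].
      intros z [<-|Hz] Hgz; [contradiction|auto].
  - destruct Hx as [<-|Hx]; [|exfalso; apply NE; eauto].
    exists h; split; [left; auto|split; auto].
    intros z [<-|Hz] Hgz; [lra|exfalso; apply NE; eauto].
Qed.

Lemma two_same (x y : R) : x <> y -> 0 < x*y ->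
  (0 < x*y /\ Rabs x < Rabs y) \/ (0 < y*x /\ Rabs y < Rabs x).
Proof.
  intros H1 H2.
  destruct (Rtotal_order x 0) as [Hx|[Hx|Hx]]; [|subst; lra|];
  (destruct (Rtotal_order y 0) as [Hy|[Hy|Hy]]; [|subst; lra|]);
  try (exfalso; nra);
  (destruct (Rtotal_order x y) as [Hxy|[Hxy|Hxy]]; [|contradiction|]);
  rewrite ?(Rabs_left x), ?(Rabs_left y), ?(Rabs_right x), ?(Rabs_right y) by lra;
  first [left; split; [nra|lra] | right; split; [nra|lra]].
Qed.

Lemma three_cases (a b c : R) : a <> b -> b <> c -> a <> c ->
  (0 < a*b /\ Rabs a < Rabs b) \/ (0 < b*a /\ Rabs b < Rabs a) \/
  (0 < a*c /\ Rabs a < Rabs c) \/ (0 < c*a /\ Rabs c < Rabs a) \/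
  (0 < b*c /\ Rabs b < Rabs c) \/ (0 < c*b /\ Rabs c < Rabs b) \/
  (a = 0 /\ b*c < 0) \/ (b = 0 /\ a*c < 0) \/ (c = 0 /\ a*b < 0).
Proof.
  intros Hab Hbc Hac.
  destruct (Rlt_dec 0 (a*b)) as [P1|P1].
  { destruct (two_same a b Hab P1) as [H|H]; tauto. }
  destruct (Rlt_dec 0 (a*c)) as [P2|P2].
  { destruct (two_same a c Hac P2) as [H|H]; tauto. }
  destruct (Rlt_dec 0 (b*c)) as [P3|P3].
  { destruct (two_same b c Hbc P3) as [H|H]; tauto. }
  destruct (Req_dec a 0) as [Ha|Ha].
  { subst. do 6 right; left; split; auto.
    destruct (Rle_lt_dec 0 (b*c)); auto. assert (b*c = 0) by lra.
    destruct (Rmult_integral _ _ H); subst; lra. }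
  destruct (Req_dec b 0) as [Hb|Hb].
  { subst. do 7 right; left; split; auto.
    destruct (Rle_lt_dec 0 (a*c)); auto. assert (a*c = 0) by lra.
    destruct (Rmult_integral _ _ H); subst; lra. }
  destruct (Req_dec c 0) as [Hc|Hc].
  { subst. do 8 right; split; auto.
    destruct (Rle_lt_dec 0 (a*b)); auto. assert (a*b = 0) by lra.
    destruct (Rmult_integral _ _ H); subst; lra. }
  exfalso.
  destruct (Rtotal_order a 0) as [Ha'|[Ha'|Ha']]; [|lra|];
  (destruct (Rtotal_order b 0) as [Hb'|[Hb'|Hb']]; [|lra|]);
  (destruct (Rtotal_order c 0) as [Hc'|[Hc'|Hc']]; [|lra|]); nra.
Qed.

Lemma opp_choice (m d b c : R) : d <> 0 -> b*c < 0 ->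
  Rabs m < Rabs (m - d/b) \/ Rabs m < Rabs (m - d/c).
Proof.
  intros Hd Hbc.
  assert (Hb : b <> 0) by (intro; subst; lra).
  assert (Hc : c <> 0) by (intro; subst; lra).
  set (u := d/b). set (w := d/c).
  assert (Eu : u*b = d) by (unfold u; field; auto).
  assert (Ew : w*c = d) by (unfold w; field; auto).
  assert (Hd2 : 0 < d*d) by (destruct (Rtotal_order d 0) as [H|[H|H]]; nra).
  assert (Huw : u*w < 0) by nra.
  destruct (Rle_lt_dec 0 m) as [Hm|Hm].
  - destruct (Rlt_dec u 0) as [Hu|Hu].
    + left. rewrite (Rabs_right m), (Rabs_right (m-u)) by lra. lra.
    + assert (w < 0) by nra. right.
      rewrite (Rabs_right m), (Rabs_right (m-w)) by lra. lra.
  - destruct (Rlt_dec 0 u) as [Hu|Hu].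
    + left. rewrite (Rabs_left m), (Rabs_left (m-u)) by lra. lra.
    + assert (0 < w). { assert (u <> 0) by (intro H0; rewrite H0 in Huw; lra). nra. }
      right. rewrite (Rabs_left m), (Rabs_left (m-w)) by lra. lra.
Qed.

Lemma len2 {X : Type} (F : list X) (r r' : X) : NoDup F -> In r F -> In r' F -> r <> r' ->
  (forall z, In z F -> z = r \/ z = r') -> length F = 2%nat.
Proof.
  intros HN Hr Hr' Hne Hall.
  assert (length F <= 2)%nat.
  { change 2%nat with (length [r; r']). apply NoDup_incl_length; auto.
    intros z Hz; destruct (Hall z Hz); subst; simpl; auto. }
  assert (2 <= length F)%nat.
  { change 2%nat with (length [r; r']). apply NoDup_incl_length.
    - constructor; [simpl; intros [H0|[]]; auto|constructor; [simpl; auto|constructor]].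
    - intros z [<-|[<-|[]]]; auto. }
  lia.
Qed.

Lemma pt_eq (x y : point) : fst x = fst y -> snd x = snd y -> x = y.
Proof. destruct x, y; simpl; intros; subst; auto. Qed.

Lemma step (P : list point) (p r r' z : point) :
  In p P -> In r P -> In r' P -> In z P ->
  fst r <> fst r' -> 0 < vd p r r' ->
  (forall p1 r1 r1', In p1 P -> In r1 P -> In r1' P -> good3 p1 r1 r1' ->
     vd p r r' <= vd p1 r1 r1') ->
  (forall p1 r1 r1', In p1 P -> In r1 P -> In r1' P -> good3 p1 r1 r1' ->
     vd p1 r1 r1' = vd p r r' -> Rabs (slope r1 r1') <= Rabs (slope r r')) ->
  snd z = slope r r' * fst z + (snd r - slope r r' * fst r) ->
  z <> r -> z <> r' -> r <> r' -> False.
Proof.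
  intros Hp Hr Hr' Hz Hx Hpos Hmin1 Hmin2 Hzl Hzr Hzr' Hrr'.
  set (m := slope r r') in *. set (k := snd r - m * fst r) in *.
  assert (Er : snd r = m * fst r + k) by (unfold k; ring).
  assert (Er' : snd r' = m * fst r' + k).
  { unfold k, m, slope. field. intro; apply Hx; lra. }
  set (d := snd p - (m * fst p + k)).
  assert (Ed : vd p r r' = Rabs d).
  { unfold vd, d. fold m. f_equal. unfold k. ring. }
  rewrite Ed in *.
  assert (Hd : d <> 0) by (intro H0; rewrite H0, Rabs_R0 in Hpos; lra).
  assert (H1 : forall x y, In x P -> In y P -> snd x = m * fst x + k -> snd y = m * fst y + k ->
            0 < (fst x - fst p) * (fst y - fst p) -> Rabs (fst x - fst p) < Rabs (fst y - fst p) -> False).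
  { intros x y Hxi Hyi Ex Ey Hpr Hab.
    set (tx := fst x - fst p) in *. set (ty := fst y - fst p) in *.
    assert (Hty : ty <> 0) by (intro H0; rewrite H0 in Hpr; lra).
    set (rho := tx / ty).
    assert (Erho : rho * ty = tx) by (unfold rho; field; auto).
    assert (Hr0 : 0 < rho) by nra.
    assert (Hr1 : rho < 1).
    { assert (Rabs tx = rho * Rabs ty).
      { rewrite <- Erho, Rabs_mult, (Rabs_right rho) by lra. reflexivity. }
      assert (0 < Rabs ty) by (apply Rabs_pos_lt; auto). nra. }
    assert (Ev : vd x p y = Rabs d * (1 - rho)).
    { unfold vd, slope.
      replace (snd x - (snd p + (snd y - snd p) / (fst y - fst p) * (fst x - fst p)))
        with (- d * (1 - rho)).
      - rewrite Rabs_mult, Rabs_Ropp, (Rabs_right (1 - rho)) by lra. reflexivity.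
      - unfold rho, d, tx, ty in *. rewrite Ex, Ey. field. auto. }
    assert (Hg : good3 x p y).
    { split. - intro H0. apply Hty. unfold ty. lra.
      - rewrite Ev. apply Rmult_lt_0_compat; lra. }
    specialize (Hmin1 x p y Hxi Hp Hyi Hg). rewrite Ev in Hmin1. nra. }
  assert (H2 : forall v w, In v P -> In w P -> snd v = m * fst v + k -> snd w = m * fst w + k ->
            fst v = fst p -> fst w <> fst p -> Rabs m < Rabs (m - d / (fst w - fst p)) -> False).
  { intros v w Hvi Hwi Ev Ew Hvp Hwp Hlt.
    assert (Evd : vd v p w = Rabs d).
    { unfold vd. rewrite Hvp. replace (snd v - (snd p + slope p w * (fst p - fst p))) with (- d).
      - apply Rabs_Ropp.
      - unfold d. rewrite Ev, Hvp. ring. }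
    assert (Es : slope p w = m - d / (fst w - fst p)).
    { unfold slope, d. rewrite Ew. field. intro; apply Hwp; lra. }
    assert (Hg : good3 v p w).
    { split; [intro; apply Hwp; auto|rewrite Evd; auto]. }
    specialize (Hmin2 v p w Hvi Hp Hwi Hg Evd). rewrite Es in Hmin2. lra. }
  assert (Hxz : fst z <> fst r) by (intro H0; apply Hzr; apply pt_eq; auto; rewrite Hzl, Er, H0; reflexivity).
  assert (Hxz' : fst z <> fst r') by (intro H0; apply Hzr'; apply pt_eq; auto; rewrite Hzl, Er', H0; reflexivity).
  destruct (three_cases (fst r - fst p) (fst r' - fst p) (fst z - fst p)) as
    [C|[C|[C|[C|[C|[C|[[C1 C2]|[[C1 C2]|[C1 C2]]]]]]]]];
    try (intro; lra);
    try (destruct C as [Cp Ca];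
         first [ exact (H1 _ _ Hr Hr' Er Er' Cp Ca) | exact (H1 _ _ Hr' Hr Er' Er Cp Ca)
               | exact (H1 _ _ Hr Hz Er Hzl Cp Ca) | exact (H1 _ _ Hz Hr Hzl Er Cp Ca)
               | exact (H1 _ _ Hr' Hz Er' Hzl Cp Ca) | exact (H1 _ _ Hz Hr' Hzl Er' Cp Ca) ]).
  - destruct (opp_choice m d _ _ Hd C2) as [C|C].
    + apply (H2 r r'); auto; lra.
    + apply (H2 r z); auto; lra.
  - destruct (opp_choice m d _ _ Hd C2) as [C|C].
    + apply (H2 r' r); auto; lra.
    + apply (H2 r' z); auto; lra.
  - destruct (opp_choice m d _ _ Hd C2) as [C|C].
    + apply (H2 z r); auto; lra.
    + apply (H2 z r'); auto; lra.
Qed.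

Definition onL (m k : R) (q : point) : bool :=
  if Req_EM_T (snd q) (m * fst q + k) then true else false.

Lemma kelly (P : list point) : NoDup P -> ~ collinear P ->
  exists m k, length (filter (onL m k) P) = 2%nat.
Proof.
  intros HN Hnc.
  assert (E1 : exists r r', In r P /\ In r' P /\ fst r <> fst r').
  { destruct P as [|p0 P'].
    - exfalso; apply Hnc. exists (mkLine 1 0 0 (or_introl R1_neq_R0)). intros q [].
    - apply NNPP; intro NE; apply Hnc.
      exists (mkLine 1 0 (fst p0) (or_introl R1_neq_R0)). intros q Hq.
      unfold on_line; simpl.
      destruct (Req_dec (fst q) (fst p0)) as [E|E]; [lra|].
      exfalso; apply NE. exists q, p0; repeat split; auto; left; auto. }
  destruct E1 as [r [r' [Hr [Hr' Hx]]]].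
  assert (E2 : exists p, In p P /\ 0 < vd p r r').
  { apply NNPP; intro NE; apply Hnc.
    exists (mkLine (- slope r r') 1 (snd r - slope r r' * fst r) (or_intror R1_neq_R0)).
    intros q Hq. unfold on_line; simpl.
    assert (vd q r r' = 0).
    { destruct (Rlt_dec 0 (vd q r r')) as [H|H]; [exfalso; apply NE; eauto|].
      unfold vd in *. pose proof (Rabs_pos (snd q - (snd r + slope r r' * (fst q - fst r)))). lra. }
    unfold vd in H.
    destruct (Req_dec (snd q - (snd r + slope r r' * (fst q - fst r))) 0) as [H0|H0]; [lra|].
    apply Rabs_pos_lt in H0. lra. }
  destruct E2 as [p [Hp Hpos]].
  set (l := list_prod P (list_prod P P)).
  set (g := fun t : point * (point * point) => good3 (fst t) (fst (snd t)) (snd (snd t))).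
  set (f := fun t : point * (point * point) => vd (fst t) (fst (snd t)) (snd (snd t))).
  assert (Hinl : forall a b c, In (a, (b, c)) l <-> In a P /\ In b P /\ In c P).
  { intros. unfold l. rewrite !in_prod_iff. tauto. }
  destruct (exists_min l g f) as [t0 [Ht0 [Hg0 Hm0]]].
  { exists (p, (r, r')). split; [apply Hinl; auto|split; auto]. }
  destruct (exists_min l (fun t => g t /\ f t = f t0) (fun t => - Rabs (slope (fst (snd t)) (snd (snd t)))))
    as [t1 [Ht1 [[Hg1 Hf1] Hm1]]].
  { exists t0; auto. }
  destruct t1 as [p1 [r1 r1']].
  apply Hinl in Ht1. destruct Ht1 as [Hp1 [Hr1 Hr1']].
  destruct Hg1 as [Hx1 Hpos1]. simpl in Hx1, Hpos1, Hm1.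
  simpl in Hf1.
  exists (slope r1 r1'), (snd r1 - slope r1 r1' * fst r1).
  assert (Hrr : r1 <> r1') by (intro; subst; auto).
  apply (len2 _ r1 r1').
  - apply NoDup_filter; auto.
  - apply filter_In; split; auto. unfold onL. destruct Req_EM_T; auto. exfalso; apply n; ring.
  - apply filter_In; split; auto. unfold onL. destruct Req_EM_T; auto. exfalso; apply n.
    unfold slope. field. simpl in Hx1. intro; apply Hx1; lra.
  - auto.
  - intros z Hz. apply filter_In in Hz. destruct Hz as [Hz Hzt].
    unfold onL in Hzt. destruct Req_EM_T as [e|e]; [|discriminate].
    destruct (classic (z = r1)); auto. destruct (classic (z = r1')); auto.
    exfalso. apply (step P p1 r1 r1' z); auto.
    + intros a b c Ha Hb Hc Hgg.
      assert (f t0 <= f (a, (b, c))) by (apply Hm0; [apply Hinl; auto|exact Hgg]).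
      unfold f in *; simpl in *. lra.
    + intros a b c Ha Hb Hc Hgg Heq.
      assert (- Rabs (slope r1 r1') <= - Rabs (slope b c)).
      { apply (Hm1 (a, (b, c))); [apply Hinl; auto|]. split; [exact Hgg|].
        unfold f in *; simpl in *. lra. }
      lra.
Qed.

Lemma ub_list (l : list R) : exists c, forall z, In z l -> z < c.
Proof.
  induction l as [|h t [c Hc]].
  - exists 0; intros z [].
  - exists (Rmax c (h + 1)). intros z [<-|Hz].
    + pose proof (Rmax_r c (h+1)); lra.
    + pose proof (Rmax_l c (h+1)); specialize (Hc z Hz); lra.
Qed.

Lemma in_remove (a b : point) (A : list point) : In b (remove_pt a A) <-> In b A /\ b <> a.
Proof.
  unfold remove_pt. rewrite filter_In.
  split.
  - intros [H1 H2]; split; auto. intro; subst.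
    destruct Req_EM_T; [|congruence]. destruct Req_EM_T; congruence.
  - intros [H1 H2]; split; auto.
    destruct Req_EM_T; auto. destruct Req_EM_T; auto.
    exfalso; apply H2; apply pt_eq; auto.
Qed.

Lemma filter_remove (f : point -> bool) (a : point) (A : list point) :
  f a = false -> filter f (remove_pt a A) = filter f A.
Proof.
  intros Hf. induction A as [|x t IH]; auto.
  unfold remove_pt in *; simpl.
  destruct (Req_EM_T (fst x) (fst a)); [destruct (Req_EM_T (snd x) (snd a))|]; simpl.
  - assert (x = a) by (apply pt_eq; auto). subst. rewrite Hf. auto.
  - destruct (f x); rewrite IH; auto.
  - destruct (f x); rewrite IH; auto.
Qed.

Lemma len_filter_map {X Y : Type} (g : Y -> bool) (h : X -> Y) (l : list X) :
  length (filter g (map h l)) = length (filter (fun x => g (h x)) l).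
Proof. induction l; simpl; auto. destruct (g (h a)); simpl; auto. Qed.

Lemma nodup_map_in {X Y : Type} (h : X -> Y) (l : list X) :
  NoDup l -> (forall x y, In x l -> In y l -> h x = h y -> x = y) -> NoDup (map h l).
Proof.
  induction l as [|x t IH]; simpl; intros HN Hi; [constructor|].
  inversion HN; subst. constructor.
  - intro Hin. apply in_map_iff in Hin. destruct Hin as [y [Hy Hyt]].
    assert (y = x) by (apply Hi; auto). subst; auto.
  - apply IH; auto.
Qed.

Definition sden (a : point) (c : R) (b : point) : R :=
  (snd b - snd a) + c * (fst b - fst a).
Definition phi (a : point) (c : R) (b : point) : point :=
  ((fst b - fst a) / sden a c b, 1 / sden a c b).

Theorem mainTheorem20 (A : list point) (a : point) :
  NoDup A -> (3 <= length A)%nat -> In a A ->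
  ~ collinear (remove_pt a A) ->
  exists L : line, card_on_line L A = 2%nat /\ ~ on_line L a.
Proof.
  intros HA H3 Ha Hnc.
  set (B := remove_pt a A) in *.
  destruct (ub_list (map (fun b => - (snd b - snd a) / (fst b - fst a)) B)) as [c Hc].
  assert (Hs : forall b, In b B -> sden a c b <> 0).
  { intros b Hb Hs0. pose proof Hb as Hb'. apply in_remove in Hb' as [_ Hne]. unfold sden in Hs0.
    destruct (Req_dec (fst b - fst a) 0) as [E|E].
    - rewrite E, Rmult_0_r in Hs0. apply Hne, pt_eq; lra.
    - assert (Hin : In (- (snd b - snd a) / (fst b - fst a)) (map (fun b => - (snd b - snd a) / (fst b - fst a)) B))
        by (apply in_map_iff; eauto).
      specialize (Hc _ Hin).
      assert (c = - (snd b - snd a) / (fst b - fst a)) by (assert (Hy : - (snd b - snd a) = c * (fst b - fst a)) by lra; rewrite Hy; field; auto).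
      lra. }
  assert (HB : NoDup B) by (apply NoDup_filter; auto).
  set (P := map (phi a c) B).
  assert (HP : NoDup P).
  { apply nodup_map_in; auto. intros x y Hx Hy E.
    unfold phi in E. injection E as E1 E2.
    pose proof (Hs x Hx) as Sx. pose proof (Hs y Hy) as Sy.
    assert (Es : sden a c x = sden a c y).
    { assert (/ sden a c x = / sden a c y) by (unfold Rdiv in E2; lra).
      rewrite <- (Rinv_inv (sden a c x)), <- (Rinv_inv (sden a c y)), H. reflexivity. }
    assert (Ex : fst x - fst a = fst y - fst a).
    { rewrite <- Es in E1. apply (Rmult_eq_reg_r (/ sden a c x)); [exact E1|].
      apply Rinv_neq_0_compat; auto. }
    apply pt_eq; [lra|]. unfold sden in Es. rewrite Ex in Es. lra. }
  assert (HPc : ~ collinear P).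
  { intros [L HL]. apply Hnc.
    destruct L as [U V W Hnz].
    destruct (Req_dec (U - W * c) 0) as [E1|E1]; [destruct (Req_dec W 0) as [E2|E2]|].
    - exists (mkLine 1 0 0 (or_introl R1_neq_R0)). intros q Hq. exfalso.
      assert (Hq' : In (phi a c q) P) by (apply in_map; auto).
      specialize (HL _ Hq'). unfold on_line, phi in HL; simpl in HL.
      rewrite E2 in E1, HL. rewrite Rmult_0_l in E1. assert (U = 0) by lra. rewrite H in *.
      destruct Hnz as [Hn|Hn]; [lra|].
      pose proof (Hs q Hq).
      assert (H1 : V * (1 / sden a c q) = 0) by lra.
      assert (H2 : V = V * (1 / sden a c q) * sden a c q) by (field; auto).
      rewrite H1, Rmult_0_l in H2. auto.
    - exists (mkLine (U - W * c) (- W) (- V + (U - W * c) * fst a + (- W) * snd a) (or_intror (Ropp_neq_0_compat _ E2))).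
      intros q Hq. assert (Hq' : In (phi a c q) P) by (apply in_map; auto).
      specialize (HL _ Hq'). unfold on_line, phi in *; simpl in *.
      pose proof (Hs q Hq). unfold sden in *.
      assert (U * (fst q - fst a) + V = W * (snd q - snd a + c * (fst q - fst a))).
      { set (s := snd q - snd a + c * (fst q - fst a)) in *.
        assert (H1 : (U * ((fst q - fst a) / s) + V * (1 / s)) * s = W * s) by (rewrite HL; ring).
        field_simplify in H1; auto. lra. }
      lra.
    - exists (mkLine (U - W * c) (- W) (- V + (U - W * c) * fst a + (- W) * snd a) (or_introl E1)).
      intros q Hq. assert (Hq' : In (phi a c q) P) by (apply in_map; auto).
      specialize (HL _ Hq'). unfold on_line, phi in *; simpl in *.
      pose proof (Hs q Hq). unfold sden in *.
      assert (U * (fst q - fst a) + V = W * (snd q - snd a + c * (fst q - fst a))).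
      { set (s := snd q - snd a + c * (fst q - fst a)) in *.
        assert (H1 : (U * ((fst q - fst a) / s) + V * (1 / s)) * s = W * s) by (rewrite HL; ring).
        field_simplify in H1; auto. lra. }
      lra. }
  destruct (kelly P HP HPc) as [m [k Hk]].
  assert (Hnz : m + k * c <> 0 \/ k <> 0).
  { destruct (Req_dec k 0) as [Ek|Ek]; [left|right; auto].
    intro Em. rewrite Ek, Rmult_0_l, Rplus_0_r in Em. subst m k.
    destruct (filter (onL 0 0) P) as [|z t] eqn:EF; [simpl in Hk; discriminate|].
    assert (Hz : In z (filter (onL 0 0) P)) by (rewrite EF; left; auto).
    apply filter_In in Hz. destruct Hz as [Hz Hzt].
    apply in_map_iff in Hz. destruct Hz as [b [<- Hb]].
    unfold onL, phi in Hzt; simpl in Hzt. destruct Req_EM_T as [e|e]; [|discriminate].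
    pose proof (Hs b Hb).
    assert (1 = 1 / sden a c b * sden a c b) by (field; auto).
    rewrite e in H0. lra. }
  set (L := mkLine (m + k * c) k (1 + (m + k * c) * fst a + k * snd a) Hnz).
  assert (HaL : ~ on_line L a).
  { unfold on_line, L; simpl. lra. }
  exists L; split; auto.
  assert (Heq : forall b, In b B ->
     onL m k (phi a c b) =
     (if Req_EM_T (lu L * fst b + lv L * snd b) (lw L) then true else false)).
  { intros b Hb. pose proof (Hs b Hb) as Sb. unfold onL, phi, L; simpl.
    unfold sden in *.
    set (s := snd b - snd a + c * (fst b - fst a)) in *.
    destruct Req_EM_T as [e1|e1]; destruct Req_EM_T as [e2|e2]; auto; exfalso.
    - apply e2.
      assert (H1 : 1 / s * s = (m * ((fst b - fst a) / s) + k) * s) by (rewrite e1; auto).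
      field_simplify in H1; auto. unfold s in H1. lra.
    - apply e1.
      assert (H1 : m * (fst b - fst a) + k * s = 1) by (unfold s; lra).
      rewrite <- H1. field. auto. }
  unfold card_on_line.
  rewrite <- (filter_remove _ a A).
  2: { destruct Req_EM_T as [e|e]; auto. exfalso; apply HaL; exact e. }
  fold B. rewrite (filter_ext_in _ (fun b => onL m k (phi a c b)) B); [|intros b0 Hb0; symmetry; apply Heq; auto].
  rewrite <- len_filter_map. exact Hk.
Qed.
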